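(* Let $\mathbb{C}$ be a regular category, $I$ a set, $\mathcal{J}=(I_j)_{j\in J}$ a family of subsets of $I$, and $(A_i)_{i\in I}$ a family of objects of $\mathbb{C}$ such that all products below exist. The following are equivalent: (i) $\prod_{i\in I}A_i$ has $\mathcal{J}$-fold subobject decompositions. (ii) For any monomorphism $s:S\to\prod_{i\in I}A_i$, the square with top arrow $(e_{I_j})_{j\in J}:S\to\prod_{j\in J}S_{I_j}$, left arrow $s$, right arrow $\prod_{j\in J}s_{I_j}:\prod_{j\in J}S_{I_j}\to\prod_{j\in J}\prod_{k\in I_j}A_k$ and bottom arrow $(\pi_{I_j})_{j\in J}:\prod_{i\in I}A_i\to\prod_{j\in J}\prod_{k\in I_j}A_k$ is a pullback, where $S\xrightarrow{e_{I_j}}S_{I_j}\xrightarrow{s_{I_j}}\prod_{k\in I_j}A_k$ is a regular epi–mono factorization of $\pi_{I_j}s$.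
   Context: A category is regular if it has finite limits and coequalizers of kernel pairs and regular epimorphisms are pullback-stable; every morphism factors as a regular epimorphism followed by a monomorphism, and the image of a subobject $S$ (represented by $s$) under a morphism $f$ is the subobject represented by the mono part of such a factorization of $fs$. For $K\subseteq I$, $\pi_K:\prod_{i\in I}A_i\to\prod_{k\in K}A_k$ is the canonical projection and the $K$-image $S_K$ of a subobject $S$ of $\prod_{i\in I}A_i$ is its image under $\pi_K$. The product $\prod_{i\in I}A_i$ has $\mathcal{J}$-fold subobject decompositions if for any two subobjects $S,T$ of $\prod_{i\in I}A_i$ with $S_{I_j}=T_{I_j}$ for all $j\in J$, we have $S=T$. *)

(* Defs.v *)
Set Implicit Arguments.
Unset Strict Implicit.

Record Category := {
  ob :> Type;
  hom : ob -> ob -> Type;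
  comp : forall {X Y Z : ob}, hom Y Z -> hom X Y -> hom X Z;
  idm : forall X : ob, hom X X;
  comp_assoc : forall X Y Z W (h : hom Z W) (g : hom Y Z) (f : hom X Y),
      comp h (comp g f) = comp (comp h g) f;
  comp_id_l : forall X Y (f : hom X Y), comp (idm Y) f = f;
  comp_id_r : forall X Y (f : hom X Y), comp f (idm X) = f
}.

Arguments hom {C} : rename.
Arguments comp {C X Y Z} : rename.
Arguments idm {C} : rename.
Notation "g \o f" := (comp g f) (at level 40, left associativity).

Section Defs.
Variable C : Category.

Definition mono {X Y : C} (f : hom X Y) : Prop :=
  forall Z (g h : hom Z X), f \o g = f \o h -> g = h.

Definition is_pullback {P A B D : C} (pa : hom P A) (pb : hom P B)
  (f : hom A D) (g : hom B D) : Prop :=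
  f \o pa = g \o pb /\
  forall (Z : C) (za : hom Z A) (zb : hom Z B), f \o za = g \o zb ->
    exists u : hom Z P, (pa \o u = za /\ pb \o u = zb) /\
      forall v : hom Z P, pa \o v = za -> pb \o v = zb -> v = u.

Definition is_coequalizer {K X Q : C} (k1 k2 : hom K X) (q : hom X Q) : Prop :=
  q \o k1 = q \o k2 /\
  forall (Z : C) (z : hom X Z), z \o k1 = z \o k2 ->
    exists u : hom Q Z, u \o q = z /\ forall v : hom Q Z, v \o q = z -> v = u.

Definition regular_epi {X Q : C} (q : hom X Q) : Prop :=
  exists (K : C) (k1 k2 : hom K X), is_coequalizer k1 k2 q.

Definition is_terminal (T : C) : Prop :=
  forall X : C, exists f : hom X T, forall g : hom X T, g = f.

Definition is_regular : Prop :=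
  (exists T : C, is_terminal T) /\
  (forall (A B D : C) (f : hom A D) (g : hom B D),
      exists (P : C) (pa : hom P A) (pb : hom P B), is_pullback pa pb f g) /\
  (forall (X Y K : C) (f : hom X Y) (k1 k2 : hom K X), is_pullback k1 k2 f f ->
      exists (Q : C) (q : hom X Q), is_coequalizer k1 k2 q) /\
  (forall (P A B D : C) (pa : hom P A) (pb : hom P B) (f : hom A D) (g : hom B D),
      is_pullback pa pb f g -> regular_epi f -> regular_epi pb).

Definition is_product (I : Type) (A : I -> C) (P : C) (p : forall i, hom P (A i)) : Prop :=
  forall (Z : C) (f : forall i, hom Z (A i)),
    exists u : hom Z P, (forall i, p i \o u = f i) /\
      forall v : hom Z P, (forall i, p i \o v = f i) -> v = u.

Definition same_subobject {S T X : C} (s : hom S X) (t : hom T X) : Prop :=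
  (exists u : hom S T, t \o u = s) /\ (exists v : hom T S, s \o v = t).

Definition is_image {S X Y M : C} (f : hom X Y) (s : hom S X) (m : hom M Y) : Prop :=
  exists e : hom S M, regular_epi e /\ mono m /\ m \o e = f \o s.

End Defs.
Arguments is_product {C} I A P p.

(* Main.v *)
Require Import Defs.
From Stdlib Require Import ClassicalEpsilon.

Section Gen.
Variable C : Category.

Lemma regepi_epi {X Q : C} (e : hom X Q) : regular_epi e ->
  forall Z (g h : hom Q Z), g \o e = h \o e -> g = h.
Proof.
  intros [K [k1 [k2 [Hc Hu]]]] Z g h Hgh.
  assert (E : (g \o e) \o k1 = (g \o e) \o k2)
    by (rewrite <- !comp_assoc, Hc; reflexivity).
  destruct (Hu Z (g \o e) E) as [w [_ Hw]].
  rewrite (Hw g eq_refl), (Hw h (eq_sym Hgh)); reflexivity.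
Qed.

Lemma fill {X Q Aa B : C} (e : hom X Q) (m : hom Aa B) (u : hom X Aa) (v : hom Q B) :
  regular_epi e -> mono m -> m \o u = v \o e -> exists d : hom Q Aa, m \o d = v.
Proof.
  intros He Hm Heq. pose proof He as [K [k1 [k2 [Hc Hu]]]].
  assert (E : u \o k1 = u \o k2).
  { apply Hm. rewrite !comp_assoc, Heq, <- !comp_assoc, Hc. reflexivity. }
  destruct (Hu _ u E) as [d [Hd _]]. exists d.
  eapply regepi_epi; [exact He|]. rewrite <- comp_assoc, Hd. exact Heq.
Qed.

Lemma prod_ext (I : Type) (A : I -> C) (P : C) (p : forall i, hom P (A i)) :
  is_product I A P p -> forall Z (g h : hom Z P), (forall i, p i \o g = p i \o h) -> g = h.
Proof.
  intros HP Z g h H. destruct (HP Z (fun i => p i \o h)) as [w [_ Hw]].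
  rewrite (Hw g H), (Hw h (fun i => eq_refl)); reflexivity.
Qed.

Lemma factorization : is_regular C -> forall (X Y : C) (f : hom X Y),
  exists (M : C) (e : hom X M) (m : hom M Y), regular_epi e /\ mono m /\ m \o e = f.
Proof.
  intros [_ [Hpb [Hcoeq Hstab]]] X Y f.
  destruct (Hpb _ _ _ f f) as [R [k1 [k2 HR]]].
  destruct (Hcoeq _ _ _ f k1 k2 HR) as [Q' [q Hq]].
  pose proof Hq as [Hqc Hqu].
  destruct (Hqu Y f (proj1 HR)) as [m [Hm _]].
  assert (Rq : regular_epi q) by (exists R, k1, k2; exact Hq).
  exists Q', q, m. split; [exact Rq|]. split; [|exact Hm].
  intros Z a b Hab.
  destruct (Hpb _ _ _ m m) as [K [g1 [g2 HK]]].
  assert (G : g1 = g2).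
  { destruct (Hpb _ _ _ q g1) as [W [wa [wb HW]]].
    destruct (Hpb _ _ _ q (g2 \o wb)) as [V [va [vb HV]]].
    pose proof (Hstab _ _ _ _ _ _ _ _ HW Rq) as rwb.
    pose proof (Hstab _ _ _ _ _ _ _ _ HV Rq) as rvb.
    eapply regepi_epi; [exact rwb|]. eapply regepi_epi; [exact rvb|].
    rewrite <- (proj1 HW), <- (proj1 HV).
    assert (E : f \o (wa \o vb) = f \o va).
    { rewrite <- Hm, !comp_assoc. rewrite <- (comp_assoc m q wa), (proj1 HW).
      rewrite comp_assoc, (proj1 HK), <- (comp_assoc m g2 wb), <- (comp_assoc m (g2 \o wb) vb), <- (proj1 HV).
      rewrite comp_assoc. reflexivity. }
    destruct (proj2 HR _ _ _ E) as [h [[H1 H2] _]].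
    rewrite <- comp_assoc, <- H1, <- H2, !comp_assoc, Hqc. reflexivity. }
  destruct (proj2 HK Z a b Hab) as [u [[H1 H2] _]].
  rewrite <- H1, <- H2, G. reflexivity.
Qed.

End Gen.

Lemma fact_sig (C : Category) (HC : is_regular C) (X Y : C) (f : hom X Y) :
  {M : C & {e : hom X M & {m : hom M Y | regular_epi e /\ mono m /\ m \o e = f}}}.
Proof.
  destruct (constructive_indefinite_description _ (@factorization _ HC _ _ f)) as [M HM].
  destruct (constructive_indefinite_description _ HM) as [e He].
  destruct (constructive_indefinite_description _ He) as [m Hm].
  exact (existT _ M (existT _ e (exist _ m Hm))).
Defined.

Lemma choice_dep (J : Type) (F : J -> Type) (P : forall j, F j -> Prop) :
  (forall j, exists x, P j x) -> exists g : forall j, F j, forall j, P j (g j).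
Proof.
  intros H. exists (fun j => proj1_sig (constructive_indefinite_description _ (H j))).
  intros j. exact (proj2_sig (constructive_indefinite_description _ (H j))).
Qed.
Theorem proposition4p3
  (C : Category) (HC : is_regular C)
  (I J : Type) (Ij : J -> I -> Prop) (A : I -> C)
  (* product of (A_i)_{i in I} *)
  (PI : C) (pI : forall i, hom PI (A i)) (HPI : is_product I A PI pI)
  (* products of (A_k)_{k in I_j} *)
  (PK : J -> C) (pK : forall j (k : {i : I | Ij j i}), hom (PK j) (A (proj1_sig k)))
  (HPK : forall j, is_product {i : I | Ij j i} (fun k : {i : I | Ij j i} => A (proj1_sig k)) (PK j) (pK j))
  (* canonical projections pi_{I_j} *)
  (pi : forall j, hom PI (PK j))
  (Hpi : forall j (k : {i : I | Ij j i}), pK j k \o pi j = pI (proj1_sig k))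
  (* product over J of the products over I_j *)
  (Q : C) (q : forall j, hom Q (PK j)) (HQ : is_product J PK Q q)
  (* bottom arrow (pi_{I_j})_{j in J} *)
  (b : hom PI Q) (Hb : forall j, q j \o b = pi j)
  (* the products prod_{j in J} S_{I_j} exist *)
  (HSprod : forall (S : C) (s : hom S PI), mono s ->
      forall (SI : J -> C) (e : forall j, hom S (SI j)) (m : forall j, hom (SI j) (PK j)),
      (forall j, regular_epi (e j) /\ mono (m j) /\ m j \o e j = pi j \o s) ->
      exists (PS : C) (r : forall j, hom PS (SI j)), is_product J SI PS r) :
  (* (i) J-fold subobject decompositions *)
  (forall (S T : C) (s : hom S PI) (t : hom T PI), mono s -> mono t ->
      (forall j (MS MT : C) (ms : hom MS (PK j)) (mt : hom MT (PK j)),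
          is_image (pi j) s ms -> is_image (pi j) t mt -> same_subobject ms mt) ->
      same_subobject s t)
  <->
  (* (ii) the square is a pullback *)
  (forall (S : C) (s : hom S PI), mono s ->
      forall (SI : J -> C) (e : forall j, hom S (SI j)) (m : forall j, hom (SI j) (PK j)),
      (forall j, regular_epi (e j) /\ mono (m j) /\ m j \o e j = pi j \o s) ->
      forall (PS : C) (r : forall j, hom PS (SI j)), is_product J SI PS r ->
      forall (top : hom S PS) (right : hom PS Q),
      (forall j, r j \o top = e j) ->
      (forall j, q j \o right = m j \o r j) ->
      is_pullback s top b right).
Proof.
  pose proof HC as [_ [Hpb _]].
  split.
  - intros Hi S s Hs SI e m Hem PS r Hr top right Htop Hright.
    assert (Hcomm : b \o s = right \o top).
    { eapply prod_ext; [exact HQ|]. intros j.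
      rewrite !comp_assoc, Hb, Hright, <- comp_assoc, Htop.
      destruct (Hem j) as [_ [_ E]]. symmetry; exact E. }
    assert (Hrm : mono right).
    { intros Z g h Hgh. eapply prod_ext; [exact Hr|]. intros j.
      destruct (Hem j) as [_ [Hmj _]]. apply Hmj.
      rewrite !comp_assoc, <- Hright, <- !comp_assoc, Hgh. reflexivity. }
    destruct (Hpb _ _ _ b right) as [T [t [t' HT]]].
    assert (Ht : mono t).
    { intros Z g h Hgh.
      assert (E2 : t' \o g = t' \o h).
      { apply Hrm. rewrite !comp_assoc, <- (proj1 HT), <- !comp_assoc, Hgh. reflexivity. }
      destruct (proj2 HT Z (t \o g) (t' \o h)) as [w [_ Hw]].
      { rewrite !comp_assoc, (proj1 HT), <- !comp_assoc, E2. reflexivity. }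
      rewrite (Hw g eq_refl E2), (Hw h (eq_sym Hgh) eq_refl). reflexivity. }
    destruct (proj2 HT S s top Hcomm) as [u0 [[Hu0 Hu0'] _]].
    assert (Hst : same_subobject s t).
    { apply Hi; [exact Hs|exact Ht|].
      intros j MS MT ms mt [es [Hes [Hms Hmses]]] [et [Het [Hmt Hmtet]]]. split.
      - eapply (fill _ es mt (et \o u0) ms); [exact Hes|exact Hmt|].
        rewrite comp_assoc, Hmtet, <- comp_assoc, Hu0. symmetry; exact Hmses.
      - destruct (Hem j) as [Hej [Hmj Hmej]].
        destruct (fill _ et (m j) (r j \o t') mt) as [d1 Hd1];
          [exact Het|exact Hmj| |].
        { rewrite comp_assoc, <- Hright, <- comp_assoc, <- (proj1 HT), comp_assoc, Hb.
          symmetry; exact Hmtet. }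
        destruct (fill _ (e j) ms es (m j)) as [d2 Hd2];
          [exact Hej|exact Hms| |].
        { rewrite Hmses, Hmej. reflexivity. }
        exists (d2 \o d1). rewrite comp_assoc, Hd2, Hd1. reflexivity. }
    destruct Hst as [_ [v Hv]].
    assert (Htv : top \o v = t').
    { eapply prod_ext; [exact Hr|]. intros j.
      destruct (Hem j) as [_ [Hmj Hmej]]. apply Hmj.
      rewrite !comp_assoc, <- Hright.
      rewrite <- (comp_assoc (q j) right top), <- Hcomm, comp_assoc, Hb, <- comp_assoc, Hv. rewrite <- (comp_assoc (q j) right t'), <- (proj1 HT), comp_assoc, Hb. reflexivity. }
    split; [exact Hcomm|].
    intros Z za zb Hz.
    destruct (proj2 HT Z za zb Hz) as [u [[Hu1 Hu2] _]].
    exists (v \o u). split; [split|].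
    + rewrite comp_assoc, Hv. exact Hu1.
    + rewrite comp_assoc, Htv. exact Hu2.
    + intros w Hw1 _. apply Hs. rewrite Hw1, comp_assoc, Hv. symmetry; exact Hu1.
  - intros Hii.
    assert (Half : forall (S T : C) (s : hom S PI) (t : hom T PI), mono s ->
      (forall j (MS MT : C) (ms : hom MS (PK j)) (mt : hom MT (PK j)),
        is_image (pi j) s ms -> is_image (pi j) t mt -> exists v : hom MT MS, ms \o v = mt) ->
      exists u : hom T S, s \o u = t).
    { intros S T s t Hs Himg.
      set (fs := fun j => @fact_sig _ HC _ _ (pi j \o s)).
      set (SI := fun j => projT1 (fs j)).
      set (e := fun j => projT1 (projT2 (fs j)) : hom S (SI j)).
      set (m := fun j => proj1_sig (projT2 (projT2 (fs j))) : hom (SI j) (PK j)).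
      assert (Hem : forall j, regular_epi (e j) /\ mono (m j) /\ m j \o e j = pi j \o s).
      { intros j. exact (proj2_sig (projT2 (projT2 (fs j)))). }
      destruct (HSprod S s Hs SI e m Hem) as [PS [r Hr]].
      destruct (Hr S e) as [top [Htop _]].
      destruct (HQ PS (fun j => m j \o r j)) as [right [Hright _]].
      pose proof (Hii S s Hs SI e m Hem PS r Hr top right Htop Hright) as HP.
      assert (Hg : forall j, exists g : hom T (SI j), m j \o g = pi j \o t).
      { intros j. destruct (@factorization _ HC _ _ (pi j \o t)) as [MT [et [mt [Het [Hmt E]]]]].
        destruct (Himg j (SI j) MT (m j) mt) as [v Hv].
        { exists (e j). exact (Hem j). }
        { exists et. auto. }
        exists (v \o et). rewrite comp_assoc, Hv. exact E. }
      destruct (@choice_dep J (fun j => hom T (SI j)) (fun j g => m j \o g = pi j \o t) Hg) as [g Hgj].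
      destruct (Hr T g) as [zb [Hzb _]].
      destruct (proj2 HP T t zb) as [u [[Hu _] _]].
      { eapply prod_ext; [exact HQ|]. intros j.
        rewrite !comp_assoc, Hb, Hright, <- comp_assoc, Hzb, Hgj. reflexivity. }
      exists u. exact Hu. }
    intros S T s t Hs Ht Himg. split.
    + apply (Half T S t s Ht). intros j MS MT ms mt H1 H2.
      exact (proj1 (Himg j MT MS mt ms H2 H1)).
    + apply (Half S T s t Hs). intros j MS MT ms mt H1 H2.
      exact (proj2 (Himg j MS MT ms mt H1 H2)).
Qed.
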